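(* Let $n\ge3$, let $\mathcal{U}=[k]$ be finite, let $\{\mathbf{p}_u\}_{u\in\mathcal{U}}$ be a probability table with every $\mathbf{p}_u\in(0,1)^n$ and $\sum_ip_u^{(i)}=1$, let $d$ be a probability distribution on $\mathcal{U}$, and let $E=\{(C^{(1)},C^{(2)}),(C^{(2)},C^{(3)}),\dots,(C^{(n-1)},C^{(n)}),(C^{(n)},C^{(1)})\}$. Then there exists a probability distribution $w$ on the set $\mathcal{R}$ of permutations of $[n]$ such that $f_d(e)=\sum_{r\in\mathcal{R}}w(r)f_r(e)$ for every $e\in E$.
   Context: $f_d(C^{(i)},C^{(j)})=\sum_u d(u)\,p_u^{(i)}/(p_u^{(i)}+p_u^{(j)})$ are the expert graph weights (here an expert cycle on $E$). For a permutation $r=(r_1,\dots,r_n)$, $f_r(C^{(r_a)},C^{(r_b)})=1$ if $a<b$ and $0$ if $a>b$ (ranking graph weights). *)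

(* Defs.v *)
From mathcomp Require Import all_boot all_order all_algebra all_fingroup.
From mathcomp Require Import reals.
Set Implicit Arguments. Unset Strict Implicit. Unset Printing Implicit Defensive.
Import Order.TTheory GRing.Theory Num.Theory.
Local Open Scope ring_scope.

(* Candidates C^(1..n) are indexed by 'I_n (0-based), users U = [k] by 'I_k. *)

Definition expert_weight (R : realType) (n k : nat) (p : 'I_k -> 'I_n -> R)
  (d : 'I_k -> R) (i j : 'I_n) : R :=
  \sum_(u < k) d u * (p u i / (p u i + p u j)).

(* Ranking graph weight of a permutation r = (r_1,...,r_n) (r maps positions
   to candidates): f_r(C^(r_a), C^(r_b)) = 1 if a < b, 0 if a > b. *)
Definition rank_weight (R : realType) (n : nat) (r : {perm 'I_n}) (x y : 'I_n) : R :=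
  if ((r^-1)%g x < (r^-1)%g y)%N then 1 else 0.

Definition cycle_edges (n : nat) : seq ('I_n * 'I_n) :=
  [seq (i, ordS i) | i <- enum 'I_n].
Arguments rank_weight R {n} r x y.

(* Main.v *)
Require Import Defs.
From mathcomp Require Import all_boot all_order all_algebra all_fingroup.
From mathcomp Require Import reals.
From mathcomp Require Import zify ring lra.
Import Order.TTheory GRing.Theory Num.Theory.
Local Open Scope ring_scope.
Set Implicit Arguments. Unset Strict Implicit. Unset Printing Implicit Defensive.


Lemma perm_of_key n (key : 'I_n -> nat) : injective key ->
  exists r : {perm 'I_n}, forall u v, ((r^-1)%g u < (r^-1)%g v)%N = (key u < key v)%N.
Proof.
move=> kinj.
pose S v := [set u | (key u < key v)%N].
have posP v : (#|S v| < n)%N.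
  have : S v \proper [set: 'I_n].
    apply/properP; split; first exact: subsetT.
    by exists v; rewrite ?inE // ltnn.
  by move/proper_card; rewrite cardsT card_ord.
have Slt u v : (key u < key v)%N -> (#|S u| < #|S v|)%N.
  move=> kuv; apply: proper_card; apply/properP; split.
    by apply/subsetP=> w; rewrite !inE => /ltn_trans; apply.
  by exists u; rewrite !inE // ltnn.
have Sle u v : (key v <= key u)%N -> (#|S v| <= #|S u|)%N.
  move=> kuv; apply: subset_leq_card.
  by apply/subsetP=> w; rewrite !inE => /leq_trans; apply.
pose pos v := Ordinal (posP v).
have posE u v : (pos u < pos v)%N = (key u < key v)%N.
  case: (ltnP (key u) (key v)) => h; first exact: Slt.
  by rewrite ltnNge /= Sle.
have pinj : injective pos.
  move=> u v /(congr1 val) /= e; apply: kinj.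
  case: (ltngtP (key u) (key v)) => // h.
  - by have := posE u v; rewrite h /= e ltnn.
  - by have := posE v u; rewrite h /= e ltnn.
exists (perm pinj)^-1%g => u v; by rewrite invgK !permE.
Qed.

Definition rot n (s v : 'I_n) : nat := (((v : nat) + (n - s)) %% n)%N.

Lemma rot_lt n (s v : 'I_n) : (rot s v < n)%N.
Proof. by rewrite /rot ltn_pmod //; case: v => v' /=; case: n {s} => //. Qed.

Lemma rot_s n (s : 'I_n) : rot s s = 0%N.
Proof. by rewrite /rot subnKC ?modnn // ltnW. Qed.

Lemma rot_S n (s i : 'I_n) : rot s (ordS i) = ((rot s i).+1 %% n)%N.
Proof. by rewrite /rot /= !modnDml -[in RHS]addn1 modnDml addn1 addSn. Qed.

Lemma rot_inj n (s : 'I_n) : injective (rot s).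
Proof.
move=> u v; rewrite /rot => /eqP; rewrite eqn_modDr => /eqP.
by rewrite !modn_small // => /val_inj.
Qed.

Lemma realize n (b : 'I_n -> bool) (a : 'I_n) : (1 < n)%N ->
  b a = ~~ b (ord_pred a) ->
  exists r : {perm 'I_n}, forall i, ((r^-1)%g i < (r^-1)%g (ordS i))%N = b i.
Proof.
move=> n1 ba.
pose s := ordS a.
pose key v := if (rot s v == 0%N) || b (ord_pred v) then (n + rot s v)%N
              else (n - rot s v)%N.
have kinj : injective key.
  move=> u v; rewrite /key.
  have := rot_lt s u; have := rot_lt s v.
  case: ifP => hu; case: ifP => hv => hlv hlu e; apply: (rot_inj (s:=s)).
  - lia.
  - move: hv => /norP [/eqP hv _]; lia.
  - move: hu => /norP [/eqP hu _]; lia.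
  - lia.
have [r hr] := perm_of_key kinj.
exists r => i; rewrite hr /key rot_S ordSK.
have := rot_lt s i.
case: (ltngtP (rot s i).+1 n) => // h _.
- rewrite (modn_small h) /=.
  case: (b i); case: ifP => _; lia.
- have ei : i = a.
    apply: ordS_inj; apply: (rot_inj (s:=s)).
    by rewrite rot_s rot_S h modnn.
  have ra : rot s a = n.-1 by rewrite -ei; lia.
  rewrite h modnn ei eqxx /= ra.
  have -> : (n.-1 == 0)%N = false by apply/eqP; lia.
  rewrite ba /=; case: (b (ord_pred a)) => /=; lia.
Qed.

Lemma change n (b : 'I_n.+1 -> bool) i j : b i != b j ->
  exists a, b a = ~~ b (ord_pred a).
Proof.
move=> bij; case: (boolP [exists a, b a == ~~ b (ord_pred a)]).
  by case/existsP => a /eqP; exists a.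
rewrite negb_exists => /forallP H.
have H' a : b a = b (ord_pred a) by move: (H a); case: (b a); case: (b (ord_pred a)).
have step k : (k < n)%N -> b (inord k.+1) = b (inord k).
  move=> kn; rewrite H'; congr b; apply: val_inj => /=.
  rewrite !inordK ?addSn //=; last lia.
  by rewrite modnDr modn_small //; lia.
have all k : (k <= n)%N -> b (inord k) = b (inord 0).
  elim: k => // k IH kn; rewrite step //; apply: IH; lia.
move: bij; rewrite -(inord_val i) -(inord_val j) !all ?eqxx //; by rewrite -ltnS ltn_ord.
Qed.


Definition Q (R : realType) n (x : 'I_n -> R) := exists w : {perm 'I_n} -> R,
  [/\ forall r, 0 <= w r, \sum_(r : {perm 'I_n}) w r = 1 &
      forall i, x i = \sum_(r : {perm 'I_n}) w r * rank_weight R r i (ordS i)].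

Lemma Q_conv (R : realType) n (x x1 x2 : 'I_n -> R) (l : R) : 0 <= l <= 1 -> Q x1 -> Q x2 ->
  (forall i, x i = l * x1 i + (1 - l) * x2 i) -> Q x.
Proof.
move=> /andP [l0 l1] [w1 [w10 w11 w1x]] [w2 [w20 w21 w2x]] hx.
exists (fun r => l * w1 r + (1 - l) * w2 r); split.
- by move=> r; rewrite addr_ge0 // mulr_ge0 // subr_ge0.
- by rewrite big_split /= -!mulr_sumr w11 w21 !mulr1 addrC subrK.
- move=> i; rewrite hx w1x w2x !mulr_sumr -big_split /=.
  by apply: eq_bigr => r _; ring.
Qed.

Lemma Q_point (R : realType) n (x : 'I_n -> R) (r : {perm 'I_n}) :
  (forall i, x i = rank_weight R r i (ordS i)) -> Q x.
Proof.
move=> hx; exists (fun r' => (r' == r)%:R); split.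
- by move=> r'; rewrite ler0n.
- by rewrite (bigD1 r) //= eqxx big1 ?addr0 // => r' /negbTE ->.
- move=> i; rewrite hx (bigD1 r) //= eqxx mul1r big1 ?addr0 // => r' /negbTE ->.
  by rewrite mul0r.
Qed.

Definition frac (R : realType) n (x : 'I_n -> R) := [set k | (0 < x k) && (x k < 1)].

Lemma frac_lt (R : realType) n (x y : 'I_n -> R) k0 :
  (forall k, k \in frac y -> k \in frac x) -> k0 \in frac x -> k0 \notin frac y ->
  (#|frac y| < #|frac x|)%N.
Proof.
move=> sub kx ky; apply: proper_card; apply/properP; split.
  by apply/subsetP.
by exists k0.
Qed.

Lemma two_le_sum (R : realType) n (f : 'I_n -> R) i j : i != j -> (forall k, 0 <= f k) ->
  f i + f j <= \sum_k f k.
Proof.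
move=> ij f0; rewrite (bigD1 i) //= (bigD1 j) 1?eq_sym //= addrA.
by rewrite lerDl sumr_ge0.
Qed.

Lemma find_other (R : realType) n (f : 'I_n -> R) i : (forall k, 0 <= f k) -> f i < 1 ->
  1 <= \sum_k f k -> \sum_k f k - f i < 1 -> exists j, j != i /\ 0 < f j < 1.
Proof.
move=> f0 fi1 s1 s2.
case: (boolP [exists j, (j != i) && (0 < f j)]).
  case/existsP => j /andP [ji fj]; exists j; split => //; rewrite fj /=.
  have := two_le_sum ji f0; lra.
rewrite negb_exists => /forallP H.
have : \sum_k f k = f i.
  rewrite (bigD1 i) //= big1 ?addr0 // => j ji.
  by move: (H j); rewrite ji /= => /negP; rewrite lt_neqAle f0 andbT => /negP; rewrite negbK eq_sym => /eqP.
lra.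
Qed.

Lemma sum_delta (R : realType) n (i : 'I_n) : \sum_k ((k == i)%:R : R) = 1.
Proof. by rewrite (bigD1 i) //= eqxx big1 ?addr0 // => k /negbTE ->. Qed.


Lemma notfrac (R : realType) n (y : 'I_n -> R) k : y k = 0 \/ y k = 1 -> k \notin frac y.
Proof. by rewrite inE; case=> ->; rewrite ?ltxx ?andbF. Qed.

Lemma sum_ones (R : realType) n : \sum_(k < n) (1 : R) = n%:R.
Proof. by rewrite sumr_const card_ord. Qed.

Lemma Q_int (R : realType) n (x : 'I_n -> R) : (1 < n)%N -> (forall k, 0 <= x k <= 1) ->
  1 <= \sum_k x k -> \sum_k x k <= n%:R - 1 -> frac x = set0 -> Q x.
Proof.
case: n x => [|n] x // n1 x01 s1 s2 fr.
have xk k : x k = 0 \/ x k = 1.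
  have : k \notin frac x by rewrite fr inE.
  rewrite inE negb_and -!leNgt; have := x01 k.
  by case/andP => ? ? /orP [] ?; [left|right]; lra.
pose b k := x k == 1.
have [i bi] : exists i, b i.
  case: (boolP [exists i, b i]); first by case/existsP => i; exists i.
  rewrite negb_exists => /forallP H.
  suff : \sum_k x k = 0 by lra.
  apply: big1 => k _; case: (xk k) => // e; move: (H k); by rewrite /b e eqxx.
have [j bj] : exists j, ~~ b j.
  case: (boolP [exists j, ~~ b j]); first by case/existsP => j; exists j.
  rewrite negb_exists => /forallP H.
  suff : \sum_k x k = n.+1%:R by rewrite mulrS; lra.
  rewrite -sum_ones; apply: eq_bigr => k _; move: (H k); by rewrite negbK /b => /eqP.
have bij : b i != b j by rewrite bi; case: (b j) bj.
have [a ha] := change bij.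
have [r hr] := realize n1 ha.
apply: (Q_point (r := r)) => k; rewrite /rank_weight hr /b.
by case: (xk k) => ->; rewrite ?eqxx // (_ : (0 == 1 :> R) = false) //; apply/eqP; lra.
Qed.


Lemma sum_upd (R : realType) n (x : 'I_n -> R) i c :
  \sum_k (if k == i then c else x k) = \sum_k x k - x i + c.
Proof.
rewrite (bigD1 i) //= eqxx [in RHS](bigD1 i) //=.
rewrite (eq_bigr (fun k => x k)); last by move=> k /negbTE ->.
ring.
Qed.

Lemma Q_all (R : realType) n (x : 'I_n -> R) : (1 < n)%N -> (forall k, 0 <= x k <= 1) ->
  1 <= \sum_k x k -> \sum_k x k <= n%:R - 1 -> Q x.
Proof.
move=> n1; move: {2}#|frac x| (leqnn #|frac x|) => N.
elim: N x => [|N IH] x hN x01 s1 s2.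
  by apply: Q_int => //; apply/eqP; rewrite -cards_eq0 -leqn0.
case: (set_0Vmem (frac x)) => [fr0 | [i hi]]; first exact: Q_int.
have IH' (y : 'I_n -> R) : (#|frac y| < #|frac x|)%N -> (forall k, 0 <= y k <= 1) ->
    1 <= \sum_k y k -> \sum_k y k <= n%:R - 1 -> Q y.
  by move=> hy; apply: IH; rewrite -ltnS (leq_trans hy).
move: (hi); rewrite inE => /andP [xi0 xi1].
have xb k : 0 <= x k /\ x k <= 1 by move: (x01 k) => /andP.
have pair j : j != i -> 0 < x j < 1 -> Q x.
  move=> ji /andP [xj0 xj1].
  have hj : j \in frac x by rewrite inE xj0 xj1.
  pose D k : R := (k == i)%:R - (k == j)%:R.
  have Di : D i = 1 by rewrite /D eqxx eq_sym (negbTE ji) subr0.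
  have Dj : D j = -1 by rewrite /D eqxx (negbTE ji) sub0r.
  have Dk k : k != i -> k != j -> D k = 0 by move=> /negbTE ki /negbTE kj; rewrite /D ki kj subrr.
  have moved c : 0 <= x i + c <= 1 -> 0 <= x j - c <= 1 ->
      [/\ forall k, 0 <= x k + c * D k <= 1,
          \sum_k (x k + c * D k) = \sum_k x k &
          forall k, k \in frac (fun k => x k + c * D k) -> k \in frac x].
    move=> hci hcj; split.
    - move=> k; case: (eqVneq k i) => [->|ki]; first by rewrite Di mulr1.
      case: (eqVneq k j) => [->|kj]; first by rewrite Dj mulrN1.
      by rewrite Dk // mulr0 addr0.
    - by rewrite big_split /= -mulr_sumr /D sumrB !sum_delta subrr mulr0 addr0.
    - move=> k; case: (eqVneq k i) => [->|ki] //; case: (eqVneq k j) => [->|kj] //.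
      by rewrite !inE Dk // mulr0 addr0.
  pose t1 := if 1 - x i <= x j then 1 - x i else x j.
  have ht1 : [/\ 0 < t1, t1 <= 1 - x i, t1 <= x j & t1 = 1 - x i \/ t1 = x j].
    rewrite /t1; case: (lerP (1 - x i) (x j)) => h; (split; [lra|lra|lra|]); [left|right]; lra.
  pose t2 := if x i <= 1 - x j then x i else 1 - x j.
  have ht2 : [/\ 0 < t2, t2 <= x i, t2 <= 1 - x j & t2 = x i \/ t2 = 1 - x j].
    rewrite /t2; case: (lerP (x i) (1 - x j)) => h; (split; [lra|lra|lra|]); [left|right]; lra.
  case: ht1 => t10 t1i t1j t1e; case: ht2 => t20 t2i t2j t2e.
  have [b1 sm1 fr1] := moved t1 ltac:(apply/andP; lra) ltac:(apply/andP; lra).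
  have [b2 sm2 fr2] := moved (- t2) ltac:(apply/andP; lra) ltac:(apply/andP; lra).
  have tn0 : t1 + t2 != 0 by apply: lt0r_neq0; lra.
  apply: (@Q_conv _ _ _ (fun k => x k + t1 * D k) (fun k => x k + - t2 * D k) (t2 / (t1 + t2))).
  - rewrite divr_ge0 /=; try lra. rewrite ler_pdivrMr; lra.
  - apply: IH' => //; try by rewrite sm1.
    case: t1e => e.
      by apply: (frac_lt fr1 hi); apply: notfrac; right; rewrite Di e; lra.
    by apply: (frac_lt fr1 hj); apply: notfrac; left; rewrite Dj e; lra.
  - apply: IH' => //; try by rewrite sm2.
    case: t2e => e.
      by apply: (frac_lt fr2 hi); apply: notfrac; left; rewrite Di e; lra.
    by apply: (frac_lt fr2 hj); apply: notfrac; right; rewrite Dj e; lra.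
  - by move=> k; field.
case: (ltrP (\sum_k x k - x i) 1) => c1.
  have [j [ji /andP hj]] := find_other (fun k => proj1 (xb k)) xi1 s1 c1.
  by apply: (pair j ji); apply/andP.
case: (ltrP (n%:R - 2) (\sum_k x k - x i)) => c2.
  have y0 k : 0 <= 1 - x k by have := xb k; lra.
  have sy : \sum_k (1 - x k) = n%:R - \sum_k x k by rewrite sumrB sum_ones.
  have a1 : 1 - x i < 1 by lra.
  have a2 : 1 <= \sum_k (1 - x k) by rewrite sy; lra.
  have a3 : \sum_k (1 - x k) - (1 - x i) < 1 by rewrite sy; lra.
  have [j [ji /andP [hj1 hj2]]] := find_other y0 a1 a2 a3.
  by apply: (pair j ji); apply/andP; split; lra.
apply: (@Q_conv _ _ _ (fun k => if k == i then 1 else x k) (fun k => if k == i then 0 else x k) (x i)).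
- by apply/andP; lra.
- apply: IH' => //.
  + apply: (frac_lt (k0 := i)) => //; last by apply: notfrac; right; rewrite eqxx.
    by move=> k; case: (eqVneq k i) => [-> _ //|ki]; rewrite !inE (negbTE ki).
  + by move=> k; case: (eqVneq k i) => _ //; apply/andP; lra.
  + rewrite sum_upd; lra.
  + rewrite sum_upd; lra.
- apply: IH' => //.
  + apply: (frac_lt (k0 := i)) => //; last by apply: notfrac; left; rewrite eqxx.
    by move=> k; case: (eqVneq k i) => [-> _ //|ki]; rewrite !inE (negbTE ki).
  + by move=> k; case: (eqVneq k i) => _ //; apply/andP; lra.
  + rewrite sum_upd; lra.
  + rewrite sum_upd; lra.
- by move=> k; case: (eqVneq k i) => [->|_]; ring.
Qed.


Unset Implicit Arguments.

Theorem lemma16 (R : realType) (n k : nat) (p : 'I_k -> 'I_n -> R) (d : 'I_k -> R) :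
  (3 <= n)%N ->
  (forall u i, 0 < p u i < 1) ->
  (forall u, \sum_(i < n) p u i = 1) ->
  (forall u, 0 <= d u) ->
  \sum_(u < k) d u = 1 ->
  exists w : {perm 'I_n} -> R,
    [/\ forall r, 0 <= w r,
        \sum_(r : {perm 'I_n}) w r = 1 &
        forall e, e \in cycle_edges n ->
          expert_weight p d e.1 e.2 = \sum_(r : {perm 'I_n}) w r * rank_weight R r e.1 e.2].
Proof.
move=> n3 p01 psum d0 dsum.
have n1 : (1 < n)%N by apply: leq_trans n3.
have p0 u i : 0 <= p u i by case/andP: (p01 u i) => /ltW.
have ordS_neq (i : 'I_n) : i != ordS i.
  apply/eqP => /(congr1 val) /=.
  case: (ltngtP i.+1 n) => [h|h|h]; first by rewrite modn_small //; lia.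
    by have := ltn_ord i; lia.
  by rewrite h modnn; lia.
have spos u i : 0 < p u i + p u (ordS i).
  by case/andP: (p01 u i) => h _; have := p0 u (ordS i); lra.
have sle1 u i : p u i + p u (ordS i) <= 1.
  by rewrite -(psum u); apply: two_le_sum.
pose a u i := p u i / (p u i + p u (ordS i)).
have a01 u i : 0 <= a u i <= 1.
  apply/andP; split; first by rewrite divr_ge0 // ltW.
  by rewrite ler_pdivrMr // mul1r; have := p0 u (ordS i); lra.
have lo u : 1 <= \sum_i a u i.
  rewrite -(psum u); apply: ler_sum => i _.
  rewrite ler_pdivlMr //; apply: ler_piMr => //.
have hi u : \sum_i a u i <= n%:R - 1.
  have e : \sum_i p u (ordS i) = 1 by rewrite -(psum u) [RHS](reindex_inj (@ordS_inj n)).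
  apply: (@le_trans _ _ (\sum_i (1 - p u (ordS i)))).
    apply: ler_sum => i _.
    have : a u i = 1 - p u (ordS i) / (p u i + p u (ordS i)).
      rewrite /a; field; exact: lt0r_neq0.
    move=> ->; rewrite lerD2l lerN2 ler_pdivlMr //; apply: ler_piMr => //.
  by rewrite sumrB sum_ones e.
pose x i := expert_weight p d i (ordS i).
have xE i : x i = \sum_u d u * a u i by [].
have sx : \sum_i x i = \sum_u d u * \sum_i a u i.
  rewrite (eq_bigr (fun i => \sum_u d u * a u i)) // exchange_big /=.
  by apply: eq_bigr => u _; rewrite mulr_sumr.
have [w [w0 w1 wx]] : Q x.
  apply: Q_all => //.
  - move=> i; rewrite xE; apply/andP; split.
      by apply: sumr_ge0 => u _; rewrite mulr_ge0 //; case/andP: (a01 u i).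
    rewrite -dsum; apply: ler_sum => u _; rewrite -[X in _ <= X]mulr1.
    by apply: ler_wpM2l => //; case/andP: (a01 u i).
  - rewrite sx -dsum; apply: ler_sum => u _; rewrite -[X in X <= _]mulr1.
    by apply: ler_wpM2l.
  - rewrite sx; apply: (@le_trans _ _ (\sum_u d u * (n%:R - 1))).
      by apply: ler_sum => u _; apply: ler_wpM2l.
    by rewrite -mulr_suml dsum mul1r.
exists w; split => // e /mapP [i _ ->] /=.
exact: wx.
Qed.
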